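(* Let $X$ be a fixed $n\times n$ matrix and set $$Z=\sum_{a,b}X_{ab}\,\langle\mathcal{P}_T(e_ae_b^* ),e_ae_b^*\rangle\,e_ae_b^* .$$ Then $\|Z\|\le\frac{2\mu_0r}{n}\|X\|$.
   Context: $U,V\subseteq\mathbb{R}^n$ are $r$-dimensional subspaces with orthogonal projections $P_U,P_V$, with coherences $\mu(U),\mu(V)\le\mu_0$, where $\mu(W)=\frac nr\max_i\|P_We_i\|^2$. $\mathcal{P}_T(Y)=P_UY+YP_V-P_UYP_V$. $e_a$ are standard basis vectors, $\langle A,B\rangle=\mathrm{trace}(A^*B)$, and $\|\cdot\|$ is the spectral norm. *)

(* Defs.v *)
From HB Require Import structures.
From mathcomp Require Import all_boot all_order all_algebra.
Set Implicit Arguments. Unset Strict Implicit. Unset Printing Implicit Defensive.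
Import Order.TTheory GRing.Theory Num.Theory.
Local Open Scope ring_scope.

Section Defs.
Variable R : rcfType.

Definition vnorm n (x : 'cV[R]_n) : R := Num.sqrt (\sum_(i < n) x i 0 ^+ 2).

Definition evec n (i : 'I_n) : 'cV[R]_n := delta_mx i 0.

Definition orth_proj_rank n (r : nat) (P : 'M[R]_n) : Prop :=
  [/\ P^T = P, P *m P = P & \rank P = r].

Definition coherence n (r : nat) (P : 'M[R]_n) : R :=
  (n%:R / r%:R) * \big[Num.max/0]_(i < n) (vnorm (P *m evec i)) ^+ 2.

Definition PT n (PU PV Y : 'M[R]_n) : 'M[R]_n :=
  PU *m Y + Y *m PV - PU *m Y *m PV.

Definition mx_inner n (A B : 'M[R]_n) : R := \tr (A^T *m B).

Definition op_bound n (A : 'M[R]_n) (c : R) : Prop :=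
  forall x : 'cV[R]_n, vnorm (A *m x) <= c * vnorm x.
Definition is_spec_norm n (A : 'M[R]_n) (s : R) : Prop :=
  op_bound A s /\ forall c, op_bound A c -> s <= c.

Definition Zmx n (PU PV X : 'M[R]_n) : 'M[R]_n :=
  \sum_(a < n) \sum_(b < n)
     (X a b * mx_inner (PT PU PV (delta_mx a b)) (delta_mx a b)) *: delta_mx a b.
End Defs.

(* Main.v *)
Require Import Defs.
From HB Require Import structures.
From mathcomp Require Import all_boot all_order all_algebra.
Import Order.TTheory GRing.Theory Num.Theory.
Local Open Scope ring_scope.

Section H.
Set Implicit Arguments.
Context {R : rcfType}.

Lemma sum_delta_l n p (F : 'I_n -> R) (a : 'I_n) (b j : 'I_p) :
  \sum_k F k * delta_mx a b k j = F a * (j == b)%:R.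
Proof.
rewrite (bigD1 a) //= big1 ?addr0; first by rewrite mxE eqxx.
by move=> k /negPf Hk; rewrite mxE Hk mulr0.
Qed.

Lemma sum_delta_r n (F : 'I_n -> R) (a b i : 'I_n) :
  \sum_k delta_mx a b i k * F k = (i == a)%:R * F b.
Proof.
rewrite (bigD1 b) //= big1 ?addr0; first by rewrite mxE eqxx andbT.
by move=> k /negPf Hk; rewrite mxE Hk andbF mul0r.
Qed.

Lemma inner_delta n (A : 'M[R]_n) a b : mx_inner A (delta_mx a b) = A a b.
Proof.
rewrite /mx_inner /mxtrace (bigD1 b) //= big1 ?addr0.
  by rewrite mxE sum_delta_l mxE eqxx mulr1.
by move=> i /negPf Hi; rewrite mxE sum_delta_l Hi mulr0.
Qed.

Lemma PT_delta n (PU PV : 'M[R]_n) a b :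
  PT PU PV (delta_mx a b) a b = PU a a + PV b b - PU a a * PV b b.
Proof.
rewrite /PT !mxE !sum_delta_l sum_delta_r !eqxx !mulr1 mul1r.
congr (_ + _ - _).
rewrite (bigD1 b) //= big1 ?addr0; first by rewrite mxE sum_delta_l eqxx mulr1.
by move=> k /negPf Hk; rewrite mxE sum_delta_l Hk mulr0 mul0r.
Qed.

Lemma Zmx_decomp n (PU PV X : 'M[R]_n) :
  Zmx PU PV X = diag_mx (\row_i PU i i) *m X
     + diag_mx (\row_i (1 - PU i i)) *m X *m diag_mx (\row_j PV j j).
Proof.
rewrite /Zmx.
rewrite [RHS]matrix_sum_delta; apply: eq_bigr => a _; apply: eq_bigr => b _.
rewrite inner_delta PT_delta; congr (_ *: _).
rewrite mul_mx_diag !mul_diag_mx !mxE.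
rewrite !mulrBl !mul1r mulrBr mulrDr [X a b * PU a a]mulrC mulrCA -mulrA addrA.
by [].
Qed.

Lemma cs n (a b : 'I_n -> R) :
  (\sum_i a i * b i) ^+ 2 <= (\sum_i a i ^+ 2) * (\sum_i b i ^+ 2).
Proof.
set A := \sum_i a i ^+ 2; set B := \sum_i b i ^+ 2; set S := \sum_i a i * b i.
have key : 0 <= \sum_i \sum_j (a i * b j - a j * b i) ^+ 2.
  by apply: sumr_ge0 => i _; apply: sumr_ge0 => j _; apply: sqr_ge0.
have E : \sum_i \sum_j (a i * b j - a j * b i) ^+ 2 =
   \sum_i \sum_j (a i * b j) ^+ 2 - (\sum_i \sum_j (a i * b j * (a j * b i))) *+ 2
   + \sum_i \sum_j (a j * b i) ^+ 2.
  rewrite -sumrMnl -sumrB -big_split; apply: eq_bigr => i _.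
  by rewrite -sumrMnl -sumrB -big_split; apply: eq_bigr => j _; rewrite sqrrB.
have E1 : \sum_i \sum_j (a i * b j) ^+ 2 = A * B.
  rewrite /A /B mulr_suml; apply: eq_bigr => i _; rewrite mulr_sumr.
  by apply: eq_bigr => j _; rewrite exprMn.
have E2 : \sum_i \sum_j (a j * b i) ^+ 2 = A * B.
  by rewrite exchange_big.
have E3 : \sum_i \sum_j (a i * b j * (a j * b i)) = S * S.
  rewrite /S mulr_suml; apply: eq_bigr => i _; rewrite mulr_sumr.
  by apply: eq_bigr => j _; rewrite mulrACA [b j * _]mulrC -mulrACA.
rewrite E E1 E2 E3 in key.
rewrite -subr_ge0 expr2.
have : 0 <= (A * B - S * S) *+ 2.
  by rewrite mulrnBl mulr2n addrAC.
by rewrite -mulr_natl pmulr_rge0.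
Qed.

Lemma vnorm_ge0 n (x : 'cV[R]_n) : 0 <= vnorm x.
Proof. exact: sqrtr_ge0. Qed.

Lemma vnormD n (x y : 'cV[R]_n) : vnorm (x + y) <= vnorm x + vnorm y.
Proof.
have hA : 0 <= \sum_i x i 0 ^+ 2 by apply: sumr_ge0 => i _; apply: sqr_ge0.
have hB : 0 <= \sum_i y i 0 ^+ 2 by apply: sumr_ge0 => i _; apply: sqr_ge0.
rewrite -[vnorm x + vnorm y]ger0_norm ?addr_ge0 ?vnorm_ge0 //.
rewrite -sqrtr_sqr /vnorm ler_sqrt ?sqr_ge0 //.
rewrite sqrrD !sqr_sqrtr //.
have -> : \sum_i (x + y) i 0 ^+ 2 =
   \sum_i x i 0 ^+ 2 + (\sum_i x i 0 * y i 0) *+ 2 + \sum_i y i 0 ^+ 2.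
  rewrite -sumrMnl -!big_split; apply: eq_bigr => i _; by rewrite mxE sqrrD.
rewrite lerD2r lerD2l lerMn2r /=.
apply: le_trans (ler_norm _) _.
rewrite -sqrtrM // -sqrtr_sqr ler_sqrt ?mulr_ge0 //.
exact: (@cs n (fun i => x i 0) (fun i => y i 0)).
Qed.

Lemma vnorm_diag n (d : 'rV[R]_n) (y : 'cV[R]_n) m : 0 <= m ->
  (forall i, `|d 0 i| <= m) -> vnorm (diag_mx d *m y) <= m * vnorm y.
Proof.
move=> hm hd.
have hB : 0 <= \sum_i y i 0 ^+ 2 by apply: sumr_ge0 => i _; apply: sqr_ge0.
rewrite -[m in m * _]ger0_norm // -sqrtr_sqr /vnorm -sqrtrM ?sqr_ge0 //.
rewrite ler_sqrt ?mulr_ge0 ?sqr_ge0 //.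
rewrite mulr_sumr; apply: ler_sum => i _.
rewrite mul_diag_mx mxE exprMn ler_wpM2r ?sqr_ge0 //.
rewrite -real_normK ?num_real // !expr2.
by apply: ler_pM; rewrite ?normr_ge0.
Qed.

Lemma proj_diag n (P : 'M[R]_n) a : P^T = P -> P *m P = P ->
  P a a = vnorm (P *m evec R a) ^+ 2 /\ P a a = \sum_i P i a ^+ 2.
Proof.
move=> hT hI.
have e2 : P a a = \sum_i P i a ^+ 2.
  rewrite -{1}hI mxE; apply: eq_bigr => k _.
  by rewrite expr2 -{1}hT mxE.
split=> //.
rewrite /vnorm sqr_sqrtr; last by apply: sumr_ge0 => i _; apply: sqr_ge0.
rewrite e2; apply: eq_bigr => i _.
by rewrite /evec mxE sum_delta_l eqxx mulr1.
Qed.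

Lemma proj_diag_bounds n r (P : 'M[R]_n) a mu0 : (0 < r)%N ->
  orth_proj_rank r P -> coherence r P <= mu0 ->
  0 <= P a a /\ P a a <= 1 /\ P a a <= mu0 * r%:R / n%:R.
Proof.
move=> hr [hT hI _] hc.
have [e1 e2] := @proj_diag n P a hT hI.
have h0 : 0 <= P a a by rewrite e2; apply: sumr_ge0 => i _; apply: sqr_ge0.
split=> //; split.
  have hsq : P a a ^+ 2 <= P a a.
    rewrite [X in _ <= X]e2 (bigD1 a) //= lerDl.
    by apply: sumr_ge0 => i _; apply: sqr_ge0.
  rewrite leNgt; apply/negP => h1.
  have : P a a * 1 < P a a * P a a by rewrite ltr_pM2l // (lt_le_trans ltr01) // ltW.
  by rewrite mulr1 -expr2 ltNge hsq.
have hn : (0 < n)%N by case: n a {e1 e2 h0 hc hT hI P} => [[]|].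
set M := \big[Num.max/0]_(i < n) vnorm (P *m evec R i) ^+ 2.
have hM : P a a <= M.
  rewrite /M (bigD1 a) //= -e1.
  by rewrite le_max lexx.
apply: (le_trans hM).
have hr0 : 0 < r%:R :> R by rewrite ltr0n.
have hn0 : 0 < n%:R :> R by rewrite ltr0n.
rewrite /coherence -/M in hc.
rewrite -(ler_pM2l (x := n%:R / r%:R)); last by rewrite divr_gt0.
apply: (le_trans hc).
by rewrite mulrC mulrA divfK ?gt_eqF // mulfK ?gt_eqF.
Qed.
End H.

Theorem lemma6p3 (R : rcfType) (n r : nat) (PU PV X : 'M[R]_n) (mu0 : R)
  (hr : (0 < r)%N)
  (hU : orth_proj_rank r PU) (hV : orth_proj_rank r PV)
  (hmuU : coherence r PU <= mu0) (hmuV : coherence r PV <= mu0)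
  (sX sZ : R) (hsX : is_spec_norm X sX) (hsZ : is_spec_norm (Zmx PU PV X) sZ) :
  sZ <= 2 * mu0 * r%:R / n%:R * sX.
Proof.
case: n PU PV X hU hV hmuU hmuV hsX hsZ => [|n] PU PV X hU hV hmuU hmuV hsX hsZ.
  apply: hsZ.2 => x; by rewrite /vnorm !big_ord0 sqrtr0 mulr0.
set m := mu0 * r%:R / n.+1%:R.
have bU := fun a => proj_diag_bounds a _ hr hU hmuU.
have bV := fun a => proj_diag_bounds a _ hr hV hmuV.
have hm : 0 <= m by have [h0 [_ h]] := bU ord0; apply: le_trans h.
have hsX0 : 0 <= sX.
  have := hsX.1 (evec R ord0).
  have -> : vnorm (evec R (ord0 : 'I_n.+1)) = 1.
    rewrite /vnorm (bigD1 ord0) //= big1 ?addr0.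
      by rewrite /evec mxE !eqxx expr1n sqrtr1.
    by move=> i /negPf hi; rewrite /evec mxE hi /= expr0n.
  by rewrite mulr1; apply: le_trans; apply: vnorm_ge0.
have -> : 2 * mu0 * r%:R / n.+1%:R * sX = m * sX + m * sX.
  by rewrite /m -!mulrA mulr2n mulrDl mul1r.
apply: hsZ.2 => x.
rewrite Zmx_decomp mulmxDl mulrDl.
apply: le_trans (vnormD _ _) _.
apply: lerD.
  rewrite -mulmxA.
  apply: le_trans (vnorm_diag _ _ _ hm _) _.
    by move=> i; rewrite mxE; have [h0 [_ h]] := bU i; rewrite ger0_norm.
  by rewrite -mulrA ler_wpM2l // hsX.1.
rewrite -!mulmxA.
apply: le_trans (vnorm_diag _ _ _ ler01 _) _.
  move=> i; rewrite mxE; have [h0 [h1 _]] := bU i.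
  by rewrite ger0_norm ?subr_ge0 // lerBlDr lerDl.
rewrite mul1r.
apply: le_trans (hsX.1 _) _.
rewrite [m * sX]mulrC -mulrA ler_wpM2l //.
apply: vnorm_diag => // i; rewrite mxE; have [h0 [_ h]] := bV i.
by rewrite ger0_norm.
Qed.
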